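(* Let $u,v\in\dot H^{-1}$ and $S>1/2$. Then for every $t\in\mathbb{R}$, with $B_2$ as defined in the context, $$\|B_2(u,v)\|_{\dot H^{-S}}\le c(S)\|u\|_{\dot H^{-1}}\|v\|_{\dot H^{-1}},\qquad c(S)=\Big(\sum_{k\in\mathbb{Z}_0}|k|^{-2S}\Big)^{1/2}.$$
   Context: Write $\mathbb{Z}_0=\mathbb{Z}\setminus\{0\}$. For $s\in\mathbb{R}$, $\dot H^s$ denotes the Hilbert space of complex sequences $v=(v_k)_{k\in\mathbb{Z}_0}$ with $\|v\|_{\dot H^s}^2=\sum_{k\in\mathbb{Z}_0}|k|^{2s}|v_k|^2<\infty$. For $t\in\mathbb{R}$, $$B_2(u,v)_k=\sum_{k_1+k_2=k,\ k_1,k_2\in\mathbb{Z}_0}\frac{e^{3ikk_1k_2t}u_{k_1}v_{k_2}}{k_1k_2},\qquad k\in\mathbb{Z}_0.$$ *)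

(* Defs.v *)
From Stdlib Require Import Reals ZArith.
From Coquelicot Require Import Coquelicot.
Open Scope R_scope.

(* Sequences indexed by Z_0 = Z \ {0} are represented as functions Z -> C;
   the value at index 0 is never used. *)
Definition seqZ0 := Z -> C.

(* Sum over Z_0 of a real family f, pairing k and -k:
   sum_{n>=0} (f (n+1) + f (-(n+1))). *)
Definition pair_term (f : Z -> R) (n : nat) : R :=
  f (Z.of_nat (S n)) + f (- Z.of_nat (S n))%Z.

Definition Hdot_term (s : R) (v : seqZ0) (k : Z) : R :=
  Rpower (IZR (Z.abs k)) (2 * s) * (Cmod (v k))^2.

Definition in_Hdot (s : R) (v : seqZ0) : Prop :=
  ex_series (pair_term (Hdot_term s v)).

Definition Hdot_norm (s : R) (v : seqZ0) : R :=
  sqrt (Series (pair_term (Hdot_term s v))).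

Definition CSeries (a : nat -> C) : C :=
  (Series (fun n => fst (a n)), Series (fun n => snd (a n))).

Definition cexpi (theta : R) : C := (cos theta, sin theta).

(* Summand of B_2(u,v)_k indexed by k1 (with k2 = k - k1); it is 0 when
   k1 = 0 or k2 = 0, i.e. these indices are excluded from the sum. *)
Definition B2_term (t : R) (u v : seqZ0) (k k1 : Z) : C :=
  let k2 := (k - k1)%Z in
  if Z.eq_dec k1 0 then RtoC 0 else
  if Z.eq_dec k2 0 then RtoC 0 else
  Cmult (Cmult (cexpi (3 * IZR k * IZR k1 * IZR k2 * t)) (Cmult (u k1) (v k2)))
        (RtoC (/ (IZR k1 * IZR k2))).

Definition B2_abs_summable (t : R) (u v : seqZ0) (k : Z) : Prop :=
  ex_series (pair_term (fun k1 => Cmod (B2_term t u v k k1))).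

(* B_2(u,v)_k = sum_{k1+k2=k, k1,k2 in Z_0} e^{3ikk1k2t} u_{k1} v_{k2}/(k1 k2) *)
Definition B2 (t : R) (u v : seqZ0) : seqZ0 :=
  fun k => Cplus (B2_term t u v k 0)
     (CSeries (fun n => Cplus (B2_term t u v k (Z.of_nat (S n)))
                              (B2_term t u v k (- Z.of_nat (S n))%Z))).

Definition cS (S : R) : R :=
  sqrt (Series (pair_term (fun k => Rpower (IZR (Z.abs k)) (- (2 * S))))).

(* Main.v *)
Require Import Defs.
From Stdlib Require Import Reals ZArith Lra Lia.
From Coquelicot Require Import Coquelicot.
Open Scope R_scope.

Lemma ser_bnd (a : nat -> R) M :
  (forall n, 0 <= a n) -> (forall N, sum_f_R0 a N <= M) ->
  ex_series a /\ Series a <= M.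
Proof.
  intros Ha HM.
  destruct (growing_cv (fun n => sum_f_R0 a n)) as [l Hl].
  - intro n. simpl. specialize (Ha (S n)). lra.
  - exists M. intros x [n ->]. apply HM.
  - assert (Hs : is_series a l) by (apply is_series_Reals; exact Hl).
    split. exists l; exact Hs.
    rewrite (is_series_unique _ _ Hs).
    assert (H1 : is_lim_seq (fun n => sum_f_R0 a n) l) by (apply is_lim_seq_Reals; exact Hl).
    pose proof (is_lim_seq_le _ _ _ _ HM H1 (is_lim_seq_const M)). simpl in H. exact H.
Qed.

Lemma part_le_ser (a : nat -> R) N :
  (forall n, 0 <= a n) -> ex_series a -> sum_f_R0 a N <= Series a.
Proof.
  intros Ha He. apply sum_incr; auto.
  pose proof (Series_correct _ He) as H.
  apply is_series_Reals in H. exact H.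
Qed.

Lemma ser_ge0 (a : nat -> R) : (forall n, 0 <= a n) -> ex_series a -> 0 <= Series a.
Proof.
  intros Ha He. eapply Rle_trans; [| apply (part_le_ser a 0); auto]. simpl. auto.
Qed.

Lemma ser_cmp (a b : nat -> R) : (forall n, 0 <= a n <= b n) -> ex_series b ->
  ex_series a.
Proof.
  intros H Hb. apply (ser_bnd a (Series b)).
  - intro n; apply H.
  - intro N. eapply Rle_trans. apply sum_Rle. intros; apply H.
    apply part_le_ser; auto. intro n. destruct (H n); lra.
Qed.

Lemma ex_scal (c : R) (a : nat -> R) : ex_series a -> ex_series (fun n => c * a n).
Proof.
  intro H. apply (@ex_series_ext _ R_NormedModule (fun n => a n * c)). intro; simpl; ring.
  apply ex_series_scal_r; auto.
Qed.

Lemma Cmod_fst (z : C) : Rabs (fst z) <= Cmod z.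
Proof.
  unfold Cmod. rewrite <- sqrt_Rsqr_abs. apply sqrt_le_1_alt.
  unfold Rsqr. simpl. nra.
Qed.
Lemma Cmod_snd (z : C) : Rabs (snd z) <= Cmod z.
Proof.
  unfold Cmod. rewrite <- sqrt_Rsqr_abs. apply sqrt_le_1_alt.
  unfold Rsqr. simpl. nra.
Qed.

Lemma Cmod_CSeries (w : nat -> C) (m : nat -> R) :
  (forall n, Cmod (w n) <= m n) -> ex_series m -> Cmod (CSeries w) <= Series m.
Proof.
  intros Hw Hm.
  assert (Hm0 : forall n, 0 <= m n) by (intro n; eapply Rle_trans; [apply Cmod_ge_0|apply Hw]).
  assert (E1 : ex_series (fun n => fst (w n))).
  { apply ex_series_Rabs. apply (ser_cmp _ m); auto. intro n; split; [apply Rabs_pos|].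
    eapply Rle_trans; [apply Cmod_fst|apply Hw]. }
  assert (E2 : ex_series (fun n => snd (w n))).
  { apply ex_series_Rabs. apply (ser_cmp _ m); auto. intro n; split; [apply Rabs_pos|].
    eapply Rle_trans; [apply Cmod_snd|apply Hw]. }
  set (x := Series (fun n => fst (w n))). set (y := Series (fun n => snd (w n))).
  assert (HC : CSeries w = (x, y)) by reflexivity.
  rewrite HC. set (c := Cmod (x, y)).
  assert (Hc : c = sqrt (x*x + y*y)) by (unfold c, Cmod; simpl; f_equal; ring).
  assert (Hpt : forall n, Rabs (x * fst (w n) + y * snd (w n)) <= c * m n).
  { intro n. eapply Rle_trans; [| apply Rmult_le_compat_l; [apply Cmod_ge_0 | apply (Hw n)]].
    unfold c. unfold Cmod at 1 2. rewrite <- sqrt_mult_alt.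
    rewrite <- sqrt_Rsqr_abs. apply sqrt_le_1_alt. unfold Rsqr. simpl.
    destruct (w n) as [p q]; simpl. rewrite !Rmult_1_r. pose proof (pow2_ge_0 (x*q - y*p)). nra.
    simpl; nra. }
  assert (E4 : ex_series (fun n => Rabs (x * fst (w n) + y * snd (w n)))).
  { apply (ser_cmp _ (fun n => c * m n)). intro n; split; [apply Rabs_pos| apply Hpt].
    apply ex_scal; auto. }
  assert (Heq : Series (fun n => x * fst (w n) + y * snd (w n)) = x*x + y*y).
  { rewrite Series_plus by (apply ex_scal; auto).
    rewrite !Series_scal_l. reflexivity. }
  assert (Hle : x*x + y*y <= c * Series m).
  { rewrite <- Heq. eapply Rle_trans. apply Rle_abs. eapply Rle_trans. apply Series_Rabs; auto.
    rewrite <- Series_scal_l. apply Series_le. intro n; split; [apply Rabs_pos|apply Hpt].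
    apply ex_scal; auto. }
  assert (c0 : 0 <= c) by apply Cmod_ge_0.
  assert (cc : c * c = x*x + y*y) by (rewrite Hc; apply sqrt_sqrt; nra).
  assert (T0 : 0 <= Series m) by (apply ser_ge0; auto).
  nra.
Qed.

Lemma lambda_trick X A B : 0 <= X -> 0 <= A -> 0 <= B ->
  (forall l, 0 < l -> 2 * X <= l * A + B / l) -> X <= sqrt A * sqrt B.
Proof.
  intros HX HA HB H.
  assert (X * X <= A * B).
  { destruct (Req_dec X 0) as [->|HX0]. nra.
    destruct (Req_dec A 0) as [HA0|HA0].
    - exfalso. specialize (H (B / X + 1)). subst A.
      assert (0 < B / X + 1) by (apply Rplus_le_lt_0_compat; [apply Rdiv_le_0_compat|]; lra).
      specialize (H H0).
      assert (B / (B / X + 1) < X).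
      { replace (B / (B/X+1)) with (B*X/(B+X)) by (field; lra).
        apply Rmult_lt_reg_r with (B+X); [lra|]. unfold Rdiv; rewrite Rmult_assoc, Rinv_l by lra. nra. }
      lra.
    - specialize (H (X / A)).
      assert (0 < X / A) by (apply Rdiv_lt_0_compat; lra).
      specialize (H H0).
      replace (X / A * A) with X in H by (field; lra).
      replace (B / (X / A)) with (A * B / X) in H by (field; lra).
      assert (X <= A * B / X) by lra.
      apply Rmult_le_compat_r with (r := X) in H1; try lra.
      replace (A * B / X * X) with (A * B) in H1 by (field; lra). lra. }
  rewrite <- sqrt_mult_alt by lra. rewrite <- (sqrt_square X) by lra.
  apply sqrt_le_1_alt. lra.
Qed.

Fixpoint sumI (f : Z -> R) (lo : Z) (n : nat) : R :=
  match n with O => 0 | S n' => f lo + sumI f (lo + 1)%Z n' end.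

Lemma sumI_split f n m : forall lo,
  sumI f lo (n + m) = sumI f lo n + sumI f (lo + Z.of_nat n)%Z m.
Proof.
  induction n as [|n IH]; intro lo; simpl.
  - rewrite Z.add_0_r; ring.
  - rewrite IH. replace (lo + 1 + Z.of_nat n)%Z with (lo + Z.pos (Pos.of_succ_nat n))%Z by lia. ring.
Qed.

Lemma sumI_snoc f n lo : sumI f lo (S n) = sumI f lo n + f (lo + Z.of_nat n)%Z.
Proof.
  replace (S n) with (n + 1)%nat by lia. rewrite sumI_split. simpl. ring.
Qed.

Lemma sumI_cons f n lo : sumI f lo (S n) = f lo + sumI f (lo + 1)%Z n.
Proof. reflexivity. Qed.

Lemma sumI_ext f g n : forall lo, (forall i, f i = g i) -> sumI f lo n = sumI g lo n.
Proof. induction n; intros lo H; simpl; auto. rewrite H, IHn; auto. Qed.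

Lemma sumI_le f g n : forall lo, (forall i, f i <= g i) -> sumI f lo n <= sumI g lo n.
Proof. induction n; intros lo H; simpl. lra. specialize (IHn (lo+1)%Z H). specialize (H lo). lra. Qed.

Lemma sumI_lin c d f g n : forall lo,
  sumI (fun i => c * f i + d * g i) lo n = c * sumI f lo n + d * sumI g lo n.
Proof. induction n; intros lo; simpl. ring. rewrite IHn. ring. Qed.

Lemma sumI_ge0 f n : forall lo, (forall i, 0 <= f i) -> 0 <= sumI f lo n.
Proof. induction n; intros lo H; simpl. lra. specialize (IHn (lo+1)%Z H). specialize (H lo). lra. Qed.

Lemma sumI_mono f lo n lo' n' : (forall i, 0 <= f i) ->
  (lo' <= lo)%Z -> (lo + Z.of_nat n <= lo' + Z.of_nat n')%Z ->
  sumI f lo n <= sumI f lo' n'.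
Proof.
  intros Hf H1 H2.
  set (d := Z.to_nat (lo - lo')). set (e := Z.to_nat (lo' + Z.of_nat n' - lo - Z.of_nat n)).
  replace n' with (d + (n + e))%nat by lia.
  rewrite !sumI_split.
  replace (lo' + Z.of_nat d)%Z with lo by lia.
  pose proof (sumI_ge0 f d lo' Hf). pose proof (sumI_ge0 f e (lo + Z.of_nat n)%Z Hf). lra.
Qed.

Lemma sumI_refl f k n : forall lo,
  sumI (fun j => f (k - j)%Z) lo n = sumI f (k - lo - Z.of_nat n + 1)%Z n.
Proof.
  induction n as [|n IH]; intro lo. reflexivity.
  change (sumI (fun j => f (k - j)%Z) lo (S n)) with (f (k - lo)%Z + sumI (fun j => f (k - j)%Z) (lo+1)%Z n).
  rewrite IH, sumI_snoc.
  replace (k - (lo + 1) - Z.of_nat n + 1)%Z with (k - lo - Z.of_nat (S n) + 1)%Z by lia.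
  replace (k - lo - Z.of_nat (S n) + 1 + Z.of_nat n)%Z with (k - lo)%Z by lia. ring.
Qed.

Lemma pair_sumI f N :
  sum_f_R0 (pair_term f) N + f 0%Z = sumI f (- (Z.of_nat N + 1))%Z (2 * N + 3).
Proof.
  induction N as [|N IH].
  - unfold pair_term. simpl. ring.
  - simpl sum_f_R0. 
    replace (2 * S N + 3)%nat with (S (S (2 * N + 3))) by lia.
    rewrite sumI_snoc, sumI_cons.
    replace (- (Z.of_nat (S N) + 1) + 1)%Z with (- (Z.of_nat N + 1))%Z by lia.
    rewrite <- IH. unfold pair_term.
    replace (- (Z.of_nat (S N) + 1) + Z.of_nat (S (2 * N + 3)))%Z with (Z.of_nat (S (S N))) by lia.
    replace (- (Z.of_nat (S N) + 1))%Z with (- Z.of_nat (S (S N)))%Z by lia. ring.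
Qed.

Lemma window f N lo n : (forall i, 0 <= f i) -> f 0%Z = 0 ->
  (- (Z.of_nat N + 1) <= lo)%Z -> (lo + Z.of_nat n <= Z.of_nat N + 2)%Z ->
  sumI f lo n <= sum_f_R0 (pair_term f) N.
Proof.
  intros Hf H0 H1 H2.
  replace (sum_f_R0 (pair_term f) N) with (sum_f_R0 (pair_term f) N + f 0%Z) by (rewrite H0; ring).
  rewrite pair_sumI. apply sumI_mono; auto. lia.
Qed.

Fixpoint sumN (f : nat -> R) (lo n : nat) : R :=
  match n with O => 0 | S n' => f lo + sumN f (S lo) n' end.

Lemma sumN_split f n m : forall lo, sumN f lo (n + m) = sumN f lo n + sumN f (lo + n) m.
Proof.
  induction n as [|n IH]; intro lo; simpl. rewrite Nat.add_0_r; ring.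
  rewrite IH. replace (S lo + n)%nat with (lo + S n)%nat by lia. ring.
Qed.

Lemma sumN_ge0 f n : forall lo, (forall i, 0 <= f i) -> 0 <= sumN f lo n.
Proof. induction n; intros lo H; simpl. lra. specialize (IHn (S lo) H). specialize (H lo). lra. Qed.

Lemma pow2_ge n : (n + 1 <= 2 ^ n)%nat.
Proof. induction n. simpl. lia. rewrite Nat.pow_succ_r'. lia. Qed.

Section Zeta.
Variable p : R.
Hypothesis Hp : 1 < p.
Definition Fz (m : nat) : R := Rpower (INR m) (- p).
Definition rz := Rpower 2 (1 - p).

Lemma Fz_pos m : 0 < Fz m.
Proof. unfold Fz, Rpower. apply exp_pos. Qed.

Lemma Fz_mono m lo : (1 <= m <= lo)%nat -> Fz lo <= Fz m.
Proof.
  intro H. unfold Fz. rewrite !Rpower_Ropp.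
  apply Rinv_le_contravar. unfold Rpower; apply exp_pos.
  apply Rle_Rpower_l. lra. split. apply lt_0_INR; lia. apply le_INR; lia.
Qed.

Lemma block len : forall lo m, (1 <= m <= lo)%nat -> sumN Fz lo len <= INR len * Fz m.
Proof.
  induction len as [|len IH]; intros lo m H; simpl sumN. simpl; lra.
  rewrite S_INR. pose proof (IH (S lo) m ltac:(lia)). pose proof (Fz_mono m lo H). lra.
Qed.

Lemma rz_pos : 0 < rz.
Proof. unfold rz, Rpower. apply exp_pos. Qed.
Lemma rz_lt1 : rz < 1.
Proof. unfold rz. assert (H : Rpower 2 (1-p) < Rpower 2 0) by (apply Rpower_lt; lra). rewrite Rpower_O in H by lra. exact H. Qed.

Lemma block_val J : INR (2 ^ J) * Fz (2 ^ J) = rz ^ J.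
Proof.
  unfold Fz, rz. rewrite pow_INR. replace (INR 2) with 2 by (simpl; ring).
  rewrite <- (Rpower_pow J 2) by lra. rewrite Rpower_mult, <- Rpower_plus.
  rewrite <- (Rpower_pow J (Rpower 2 (1 - p))) by (unfold Rpower; apply exp_pos).
  rewrite Rpower_mult. f_equal. ring.
Qed.

Lemma geom J : (1 - rz) * sumN (fun j => rz ^ j) 0 J = 1 - rz ^ J.
Proof.
  induction J. simpl; ring.
  replace (S J) with (J + 1)%nat by lia. rewrite sumN_split, pow_add. simpl.
  rewrite Rmult_plus_distr_l, IHJ. ring.
Qed.

Lemma geom_bnd J : sumN (fun j => rz ^ j) 0 J <= / (1 - rz).
Proof.
  pose proof rz_lt1. pose proof rz_pos. pose proof (geom J).
  assert (0 <= rz ^ J) by (apply pow_le; lra).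
  apply Rmult_le_reg_l with (1 - rz). lra. rewrite H1, Rinv_r by lra. lra.
Qed.

Lemma condense J : sumN Fz 1 (2 ^ J - 1) <= sumN (fun j => rz ^ j) 0 J.
Proof.
  induction J. simpl. lra.
  pose proof (pow2_ge J).
  replace (2 ^ S J - 1)%nat with ((2 ^ J - 1) + 2 ^ J)%nat by (rewrite Nat.pow_succ_r'; lia).
  replace (S J) with (J + 1)%nat by lia.
  rewrite !sumN_split. replace (1 + (2 ^ J - 1))%nat with (2 ^ J)%nat by lia.
  pose proof (block (2 ^ J) (2 ^ J) (2 ^ J) ltac:(lia)). rewrite block_val in H0.
  simpl sumN. lra.
Qed.

Lemma zeta_partial N : sum_f_R0 (fun n => Fz (S n)) N = sumN Fz 1 (S N).
Proof.
  induction N. simpl; ring.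
  simpl sum_f_R0. rewrite IHN. replace (S (S N)) with (S N + 1)%nat by lia.
  rewrite sumN_split. simpl. replace (S (N + 1)) with (S (S N)) by lia. ring.
Qed.

Lemma zeta_bnd N : sum_f_R0 (fun n => Fz (S n)) N <= / (1 - rz).
Proof.
  rewrite zeta_partial. eapply Rle_trans; [| apply (geom_bnd (S N))].
  eapply Rle_trans; [| apply condense].
  pose proof (pow2_ge (S N)).
  replace (2 ^ S N - 1)%nat with (S N + (2 ^ S N - 1 - S N))%nat by lia.
  rewrite sumN_split. pose proof (sumN_ge0 Fz (2 ^ S N - 1 - S N) (1 + S N) (fun i => Rlt_le _ _ (Fz_pos i))). lra.
Qed.

Lemma zeta_ex : ex_series (fun n => Fz (S n)).
Proof.
  apply (ser_bnd _ (/ (1 - rz))). intro; apply Rlt_le, Fz_pos. apply zeta_bnd.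
Qed.
End Zeta.

Definition aa (u : seqZ0) (k : Z) : R :=
  if Z.eq_dec k 0 then 0 else Cmod (u k) / Rabs (IZR k).
Definition sq (u : seqZ0) (k : Z) : R := aa u k ^ 2.

Lemma aa_ge0 u k : 0 <= aa u k.
Proof.
  unfold aa. destruct (Z.eq_dec k 0). lra.
  apply Rdiv_le_0_compat. apply Cmod_ge_0. apply Rabs_pos_lt, eq_IZR_contrapositive; auto.
Qed.
Lemma sq_ge0 u k : 0 <= sq u k.
Proof. unfold sq. apply pow2_ge_0. Qed.
Lemma aa_0 u : aa u 0%Z = 0.
Proof. reflexivity. Qed.
Lemma sq_0 u : sq u 0%Z = 0.
Proof. unfold sq; rewrite aa_0; ring. Qed.

Lemma Hdot_ge0 s v k : 0 <= Hdot_term s v k.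
Proof.
  unfold Hdot_term. apply Rmult_le_pos. unfold Rpower; left; apply exp_pos. apply pow2_ge_0.
Qed.

Lemma sq_Hdot u k : k <> 0%Z -> sq u k = Hdot_term (-1) u k.
Proof.
  intro Hk. unfold sq, aa, Hdot_term. destruct (Z.eq_dec k 0); [contradiction|].
  rewrite abs_IZR. assert (Hx : 0 < Rabs (IZR k)) by (apply Rabs_pos_lt, eq_IZR_contrapositive; auto).
  replace (2 * -1) with (- INR 2) by (simpl; ring).
  rewrite Rpower_Ropp, Rpower_pow by auto. field. lra.
Qed.

Lemma pair_sq u n : pair_term (sq u) n = pair_term (Hdot_term (-1) u) n.
Proof. unfold pair_term. rewrite !sq_Hdot; auto; lia. Qed.

Lemma Cmod_B2term t u v k k1 : Cmod (B2_term t u v k k1) = aa u k1 * aa v (k - k1).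
Proof.
  unfold B2_term, aa. cbv zeta.
  destruct (Z.eq_dec k1 0). rewrite Cmod_R, Rabs_R0. ring.
  destruct (Z.eq_dec (k - k1) 0). rewrite Cmod_R, Rabs_R0. ring.
  rewrite !Cmod_mult, Cmod_R.
  assert (He : forall th, Cmod (cexpi th) = 1).
  { intro th. unfold cexpi, Cmod. simpl. rewrite <- sqrt_1 at 3. f_equal.
    pose proof (sin2_cos2 th). unfold Rsqr in H. nra. }
  rewrite He. assert (H1 : IZR k1 <> 0) by (apply eq_IZR_contrapositive; auto).
  assert (H2 : IZR (k - k1) <> 0) by (apply eq_IZR_contrapositive; auto).
  rewrite Rabs_inv, Rabs_mult. field. split; apply Rabs_no_R0; auto.
Qed.

Section Main.
Variables (t : R) (u v : seqZ0).
Hypothesis Hu : in_Hdot (-1) u.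
Hypothesis Hv : in_Hdot (-1) v.
Let A := Series (pair_term (Hdot_term (-1) u)).
Let B := Series (pair_term (Hdot_term (-1) v)).

Lemma pair_ge0 f n : (forall i, 0 <= f i) -> 0 <= pair_term f n.
Proof. intro H. unfold pair_term. pose proof (H (Z.of_nat (S n))). pose proof (H (- Z.of_nat (S n))%Z). lra. Qed.

Lemma sq_part w N : in_Hdot (-1) w ->
  sum_f_R0 (pair_term (sq w)) N <= Series (pair_term (Hdot_term (-1) w)).
Proof.
  intro Hw. rewrite (sum_eq _ (pair_term (Hdot_term (-1) w))) by (intros; apply pair_sq).
  apply part_le_ser; auto. intro; apply pair_ge0, Hdot_ge0.
Qed.

Lemma h_partial k l N : 0 < l ->
  sum_f_R0 (pair_term (fun k1 => aa u k1 * aa v (k - k1))) N <= (l * A + B / l) / 2.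
Proof.
  intro Hl. set (hk := fun k1 => aa u k1 * aa v (k - k1)).
  pose proof (pair_sumI hk N) as E.
  assert (hk 0%Z = 0) by (unfold hk; rewrite aa_0; ring).
  rewrite H, Rplus_0_r in E. rewrite E.
  eapply Rle_trans.
  apply (sumI_le hk (fun i => (l/2) * sq u i + (/(2*l)) * sq v (k - i)%Z)).
  { intro i. unfold hk, sq. pose proof (aa_ge0 u i). pose proof (aa_ge0 v (k - i)).
    set (a := aa u i). set (b := aa v (k - i)).
    assert (0 <= / l * (l * a - b) ^ 2) by (apply Rmult_le_pos; [left; apply Rinv_0_lt_compat; auto| apply pow2_ge_0]).
    replace (l / 2 * a ^ 2 + / (2 * l) * b ^ 2) with (a * b + / 2 * (/ l * (l * a - b) ^ 2)) by (field; lra).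
    lra. }
  rewrite (sumI_lin (l/2) (/(2*l)) (sq u) (fun i => sq v (k - i)%Z)).
  rewrite sumI_refl.
  assert (S1 : sumI (sq u) (- (Z.of_nat N + 1)) (2 * N + 3) <= A).
  { eapply Rle_trans; [apply (window _ N)|apply sq_part; auto].
    apply sq_ge0. apply sq_0. lia. lia. }
  assert (S2 : sumI (sq v) (k - - (Z.of_nat N + 1) - Z.of_nat (2 * N + 3) + 1) (2 * N + 3) <= B).
  { eapply Rle_trans; [apply (window _ (N + Z.abs_nat k))|apply sq_part; auto].
    apply sq_ge0. apply sq_0. lia. lia. }
  assert (0 < l/2) by lra. assert (0 < /(2*l)) by (apply Rinv_0_lt_compat; lra).
  replace ((l * A + B / l) / 2) with (l/2 * A + /(2*l) * B) by (field; lra).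
  apply Rplus_le_compat; apply Rmult_le_compat_l; lra.
Qed.

Lemma A_ge0 : 0 <= A.
Proof. apply ser_ge0; auto. intro; apply pair_ge0, Hdot_ge0. Qed.
Lemma B_ge0 : 0 <= B.
Proof. apply ser_ge0; auto. intro; apply pair_ge0, Hdot_ge0. Qed.

Lemma h_summable k : ex_series (pair_term (fun k1 => aa u k1 * aa v (k - k1))).
Proof.
  apply (ser_bnd _ ((1 * A + B / 1) / 2)). intro; apply pair_ge0. intro; apply Rmult_le_pos; apply aa_ge0.
  intro N. apply h_partial; lra.
Qed.

Lemma h_series_bnd k : Series (pair_term (fun k1 => aa u k1 * aa v (k - k1))) <= sqrt A * sqrt B.
Proof.
  apply lambda_trick. apply ser_ge0. intro; apply pair_ge0. intro; apply Rmult_le_pos; apply aa_ge0.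
  apply h_summable. apply A_ge0. apply B_ge0.
  intros l Hl. assert (Series (pair_term (fun k1 => aa u k1 * aa v (k - k1))) <= (l * A + B / l) / 2).
  { apply (ser_bnd _ ((l * A + B / l) / 2)). intro; apply pair_ge0. intro; apply Rmult_le_pos; apply aa_ge0.
    intro N. apply h_partial; lra. }
  lra.
Qed.

Lemma B2_mod k : Cmod (B2 t u v k) <= sqrt A * sqrt B.
Proof.
  eapply Rle_trans; [| apply (h_series_bnd k)].
  unfold B2. eapply Rle_trans. apply Cmod_triangle.
  assert (Cmod (B2_term t u v k 0) = 0) by (rewrite Cmod_B2term, aa_0; ring).
  rewrite H, Rplus_0_l. apply Cmod_CSeries. 2: apply h_summable.
  intro n. eapply Rle_trans. apply Cmod_triangle. unfold pair_term. rewrite !Cmod_B2term. lra.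
Qed.
End Main.

Theorem lemma7p5 (u v : seqZ0) (S t : R) :
  in_Hdot (-1) u -> in_Hdot (-1) v -> 1/2 < S ->
  (forall k : Z, k <> 0%Z -> B2_abs_summable t u v k) /\
  in_Hdot (- S) (B2 t u v) /\
  Hdot_norm (- S) (B2 t u v) <= cS S * Hdot_norm (-1) u * Hdot_norm (-1) v.
Proof.
  intros Hu Hv HS.
  set (A := Series (pair_term (Hdot_term (-1) u))).
  set (B := Series (pair_term (Hdot_term (-1) v))).
  assert (HA : 0 <= A) by (apply A_ge0; auto).
  assert (HB : 0 <= B) by (apply B_ge0; auto).
  set (Zf := fun k : Z => Rpower (IZR (Z.abs k)) (- (2 * S))).
  assert (HZ : ex_series (pair_term Zf)).
  { apply (@ex_series_ext _ R_NormedModule (fun n => 2 * Fz (2 * S) (Datatypes.S n))).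
    - intro n. unfold pair_term, Zf, Fz. rewrite Z.abs_opp, Z.abs_eq by lia.
      rewrite <- INR_IZR_INZ. simpl; ring.
    - apply ex_scal. apply zeta_ex. lra. }
  assert (Zf0 : forall k, 0 <= Zf k) by (intro; unfold Zf, Rpower; left; apply exp_pos).
  assert (Hpt : forall n, 0 <= pair_term (Hdot_term (- S) (B2 t u v)) n <= (A * B) * pair_term Zf n).
  { intro n. split. apply pair_ge0, Hdot_ge0.
    assert (forall k, Hdot_term (- S) (B2 t u v) k <= A * B * Zf k).
    { intro k. unfold Hdot_term, Zf. replace (2 * - S) with (- (2 * S)) by ring.
      assert (Cmod (B2 t u v k) ^ 2 <= A * B).
      { replace (A * B) with ((sqrt A * sqrt B) ^ 2).
        apply pow_incr. split. apply Cmod_ge_0. apply B2_mod; auto.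
        rewrite Rpow_mult_distr, !pow2_sqrt; auto. }
      pose proof (Zf0 k). unfold Zf in H0. nra. }
    unfold pair_term. pose proof (H (Z.of_nat (Datatypes.S n))). pose proof (H (- Z.of_nat (Datatypes.S n))%Z). lra. }
  assert (Hex : in_Hdot (- S) (B2 t u v)).
  { apply (ser_cmp _ (fun n => (A * B) * pair_term Zf n)); auto. apply ex_scal; auto. }
  split; [|split; auto].
  - intros k _. unfold B2_abs_summable.
    apply (@ex_series_ext _ R_NormedModule (pair_term (fun k1 => aa u k1 * aa v (k - k1)))).
    intro n. unfold pair_term. rewrite !Cmod_B2term. reflexivity.
    apply h_summable; auto.
  - unfold Hdot_norm, cS. fold Zf. fold A. fold B.
    eapply Rle_trans. apply sqrt_le_1_alt. apply (Series_le _ _ Hpt). apply ex_scal; auto.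
    rewrite Series_scal_l. rewrite !sqrt_mult_alt; auto. lra. apply Rmult_le_pos; auto.
Qed.
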